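(* Let $T$ be a tree with diametral path $D = v_0 v_1\cdots v_d$. If for some $i$ there is a vertex $u \notin D$ protruding from $v_i$ with $d(u,v_i) = \ell > 2$ (i.e. a limb of length $\ell>2$ protrudes from $v_i$), then $T$ is not diametrical.
   Context: Let $G=(V,E)$ be a finite connected graph with distance $d(u,v)$, eccentricity $e(v)=\max_w d(v,w)$ and diameter $\mathrm{diam}(G)=\max_v e(v)$. A broadcast is a function $f: V\to\{0,\dots,\mathrm{diam}(G)\}$ with $f(v)\le e(v)$; its cost is $\sum_v f(v)$; it is dominating if every $u$ has some $v$ with $f(v)\ge 1$ and $d(u,v)\le f(v)$; a dominating broadcast is minimal if decreasing $f(v)$ for any $v$ with $f(v)>0$ destroys domination. $\Gamma_b(G)$ is the maximum cost of a minimal dominating broadcast, and $G$ is called diametrical if $\Gamma_b(G)=\mathrm{diam}(G)$. For a tree with fixed diametral path $D$, a vertex $u\notin D$ protrudes from $v_i\in D$ if $v_i$ is the vertex of $D$ closest to $u$. *)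

(* Defs.v *)
From mathcomp Require Import all_boot.
Set Implicit Arguments. Unset Strict Implicit. Unset Printing Implicit Defensive.

Section Graphs.
Variables (T : finType) (e : rel T).

Definition simple_graph : Prop := symmetric e /\ irreflexive e.

Definition walkb (n : nat) (u v : T) : bool :=
  [exists p : n.-tuple T, path e u p && (last u p == v)].

Definition connected_graph : Prop := forall u v : T, connect e u v.

Definition acyclic : Prop :=
  ~ exists c : seq T, [/\ uniq c, 2 < size c & cycle e c].

Definition tree : Prop := [/\ simple_graph, connected_graph & acyclic].

(* distance: least length of a walk (walks shorter than #|T| suffice in a
   connected graph) *)
Definition dist (u v : T) : nat := find (fun n => walkb n u v) (iota 0 #|T|).

Definition ecc (v : T) : nat := \max_(w : T) dist v w.
Definition diam : nat := \max_(v : T) ecc v.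

Definition broadcastb (f : T -> nat) : bool := [forall v, f v <= ecc v].
Definition cost (f : T -> nat) : nat := \sum_(v : T) f v.

Definition dominatingb (f : T -> nat) : bool :=
  [forall u, [exists v, (1 <= f v) && (dist u v <= f v)]].

Definition minimal_dominating_broadcastb (f : T -> nat) : bool :=
  [&& broadcastb f, dominatingb f &
      [forall v, [forall k : 'I_(f v),
         ~~ dominatingb (fun w => if w == v then val k else f w)]]].

(* Every broadcast takes values <= ecc <= #|T|, so all broadcasts are
   represented by {ffun T -> 'I_#|T|.+1}. *)
Definition Gamma_b : nat :=
  \max_(f : {ffun T -> 'I_#|T|.+1}
          | minimal_dominating_broadcastb (fun v => val (f v)))
     cost (fun v => val (f v)).

Definition diametrical : Prop := Gamma_b = diam.

Definition diametral_path (v0 : T) (rest : seq T) : Prop :=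
  [/\ path e v0 rest, uniq (v0 :: rest), size rest = diam
    & dist v0 (last v0 rest) = diam].

Definition protrudes_from (D : seq T) (u vi : T) : Prop :=
  [/\ u \notin D, vi \in D & forall x, x \in D -> x != vi -> dist u vi < dist u x].

End Graphs.

(* Main.v *)
Require Import Defs.
From mathcomp Require Import all_boot zify.
Set Implicit Arguments. Unset Strict Implicit. Unset Printing Implicit Defensive.


Section Basics.
Variables (T : finType) (e : rel T).
Hypothesis esym : symmetric e.
Hypothesis econn : connected_graph e.

Lemma walkP n u v :
  reflect (exists p : seq T, [/\ size p = n, path e u p & last u p = v])
          (walkb e n u v).
Proof.
apply: (iffP existsP) => [[t /andP[pt /eqP lt]]|[p [sp pp lp]]].
  by exists (tval t); rewrite size_tuple.
have sz : size p == n by rewrite sp.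
by exists (Tuple sz); rewrite /= pp lp eqxx.
Qed.

Lemma walk_short u v : exists p : seq T,
  [/\ size p < #|T|, path e u p & last u p = v].
Proof.
have /connectP[p pp lp] := econn u v.
case: (shortenP pp) lp => p' pp' up' _ lp'.
exists p'; split => //.
move/card_uniqP: up' => c.
by rewrite -ltnS -[(size p').+1]/(size (u :: p')) -c ltnS max_card.
Qed.

Lemma dist_walk u v : walkb e (dist e u v) u v.
Proof.
rewrite /dist.
have [p [sp pp lp]] := walk_short u v.
have hs : has (fun n => walkb e n u v) (iota 0 #|T|).
  apply/hasP; exists (size p); first by rewrite mem_iota.
  by apply/walkP; exists p.
have := nth_find 0 hs.
by rewrite nth_iota //; move: hs; rewrite has_find size_iota.
Qed.

Lemma dist_lt u v : dist e u v < #|T|.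
Proof.
rewrite /dist.
have [p [sp pp lp]] := walk_short u v.
have hs : has (fun n => walkb e n u v) (iota 0 #|T|).
  apply/hasP; exists (size p); first by rewrite mem_iota.
  by apply/walkP; exists p.
by move: hs; rewrite has_find size_iota.
Qed.

Lemma dist_min n u v : walkb e n u v -> dist e u v <= n.
Proof.
move=> w; rewrite leqNgt; apply/negP => lt.
have := before_find 0 lt.
rewrite nth_iota; last by apply: ltn_trans lt (dist_lt u v).
by rewrite add0n w.
Qed.

Lemma dist_le u p : path e u p -> dist e u (last u p) <= size p.
Proof. by move=> pp; apply: dist_min; apply/walkP; exists p. Qed.

Lemma geodesic u v : exists p : seq T,
  [/\ size p = dist e u v, path e u p & last u p = v].
Proof. exact/walkP/dist_walk. Qed.

Lemma dist_tri x y z : dist e x z <= dist e x y + dist e y z.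
Proof.
have [p [sp pp lp]] := geodesic x y.
have [q [sq pq lq]] := geodesic y z.
apply: dist_min; apply/walkP; exists (p ++ q).
by rewrite size_cat sp sq cat_path pp lp pq last_cat lp lq.
Qed.

Lemma last_rev_belast (u : T) p : last (last u p) (rev (belast u p)) = u.
Proof.
elim: p u => //= a p IH u.
by rewrite rev_cons last_rcons.
Qed.

Lemma rev_walk u p : path e u p ->
  path e (last u p) (rev (belast u p)).
Proof.
move=> pp; rewrite rev_path; apply: etrans pp; apply: eq_path => a b.
by rewrite esym.
Qed.

Lemma dist_sym u v : dist e u v = dist e v u.
Proof.
suff H : forall a b, dist e a b <= dist e b a by apply/eqP; rewrite eqn_leq !H.
move=> a b; have [p [sp pp lp]] := geodesic b a.
apply: dist_min; apply/walkP; exists (rev (belast b p)).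
by rewrite size_rev size_belast sp -lp rev_walk // last_rev_belast.
Qed.

Lemma dist0 u : dist e u u = 0.
Proof. by have := @dist_le u [::] isT; rewrite leqn0 => /eqP. Qed.

Lemma dist0_eq u v : dist e u v = 0 -> u = v.
Proof. by move=> h; have := dist_walk u v; rewrite h => /walkP[p [sz _ lp]]; case: p sz lp => // _ <-. Qed.

Lemma dist_edge u v : e u v -> dist e u v <= 1.
Proof. by move=> h; have := @dist_le u [:: v]; rewrite /= h; apply. Qed.

Lemma dist1_edge u v : dist e u v = 1 -> e u v.
Proof.
move=> h; have := dist_walk u v; rewrite h => /walkP[p [sz pp lp]].
by case: p sz pp lp => [|a [|]] //= _; rewrite andbT => ? <-.
Qed.

End Basics.


Section Unique.
Variables (T : finType) (e : rel T).
Hypothesis esym : symmetric e.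
Hypothesis acyc : acyclic e.

Lemma rev_walk' u p : path e u p ->
  path e (last u p) (rev (belast u p)).
Proof.
move=> pp; rewrite rev_path; apply: etrans pp; apply: eq_path => a b.
by rewrite esym.
Qed.

Lemma no_fork x P Q : path e x P -> path e x Q -> uniq (x :: P) ->
  uniq (x :: Q) -> has (fun y => y \in Q) P -> head x P != head x Q -> False.
Proof.
move=> pP pQ uP uQ hs hd.
case: (split_find_nth x hs) pP uP hd => z p1 p2 zQ nh pP uP hd.
case/splitPr: zQ pQ uQ nh hd => q1 q2 pQ uQ nh hd.
apply: acyc; exists (x :: p1 ++ z :: rev q1); split.
- move: uP uQ nh; rewrite cat_rcons.
  move=> uP uQ nh.
  move: uP uQ; rewrite !cons_uniq => /andP[xP uP'] /andP[xQ uQ'].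
  move: xP xQ; rewrite !mem_cat !in_cons !negb_or => /and3P[xp1 xz _] /and3P[xq1 _ _].
  move: uP' uQ'; rewrite !cat_uniq /= !negb_or => /and3P[up1 /andP[zp1 _] _] /and3P[uq1 /andP[zq1 _] _].
  apply/andP; split.
    by rewrite mem_rev xp1 xz xq1.
  rewrite up1 zp1 mem_rev zq1 rev_uniq uq1 /= andbT.

  apply/hasPn => y; rewrite mem_rev => yq1; apply/negP => yp1.
  by move/hasP: nh; apply; exists y => //; rewrite mem_cat yq1.
- case E1: p1 => [|a p1']; first last.
    by rewrite /= size_cat /=; lia.
  case E2: q1 => [|b q1']; first last.
    by rewrite /= ?size_cat /= size_rev.
  by subst; move: hd; rewrite /= eqxx.
- rewrite /= rcons_cat /= -rev_cons.
  move: pP; rewrite cat_rcons cat_path /= => /andP[pp1 /andP[ez _]].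
  rewrite cat_path pp1 /= ez /=.
  move: pQ; rewrite -cat_rcons cat_path => /andP[pq _].
  have := rev_walk' pq; rewrite last_rcons belast_rcons.
  by [].
Qed.

Lemma path_unique x p q : path e x p -> path e x q -> uniq (x :: p) ->
  uniq (x :: q) -> last x p = last x q -> p = q.
Proof.
elim: p x q => [|a p IH] x [|b q] //=.
- move=> _ _ _ /andP[xq _] lx; exfalso; move: xq.
  by rewrite lx mem_last.
- move=> _ _ /andP[xq _] _ lx; exfalso; move: xq.
  by rewrite -lx mem_last.
move=> /andP[ea pa] /andP[eb pb] ua ub l.
have [ab|ab] := eqVneq a b.
  subst b; congr (_ :: _); apply: (IH a) => //.
  - by case/andP: ua.
  - by case/andP: ub.
exfalso; apply: (@no_fork x (a :: p) (b :: q)).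
- by rewrite /= ea.
- by rewrite /= eb.
- exact: ua.
- exact: ub.
- apply/hasP; exists (last a p); first exact: mem_last.
  by rewrite l mem_last.
- by [].
Qed.

End Unique.


Section Seqs.
Variables (T : eqType) (e : rel T).

Lemma drop_path (x : T) (s : seq T) k : k <= size s -> path e x s -> path e (nth x (x :: s) k) (drop k s).
Proof.
elim: s x k => [|a s IH] x k; first by case: k.
case: k => [|k] //= ks /andP[_ ps].
rewrite (set_nth_default a x) //; exact: IH.
Qed.

Lemma last_drop (x : T) (s : seq T) k : k <= size s -> last (nth x (x :: s) k) (drop k s) = last x s.
Proof.
elim: s x k => [|a s IH] x [|k] //= ks.
by rewrite (set_nth_default a x) //; apply: IH.
Qed.

Lemma last_take (x : T) (s : seq T) k : k <= size s -> last x (take k s) = nth x (x :: s) k.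
Proof.
elim: s x k => [|a s IH] x [|k] //= ks.
by rewrite (set_nth_default a x) //; apply: IH.
Qed.

Lemma uniq_drop_cons (x : T) (s : seq T) k : uniq (x :: s) -> k <= size s ->
  uniq (nth x (x :: s) k :: drop k s).
Proof.
move=> u ks; rewrite -drop_nth //; exact: drop_uniq.
Qed.

Lemma nth_notin_drop (x : T) (s : seq T) k : uniq (x :: s) -> k <= size s ->
  nth x (x :: s) k \notin drop k s.
Proof. by move=> u ks; have := uniq_drop_cons u ks; case/andP. Qed.

Lemma mem_drop_sub (x : T) (s : seq T) k y : y \in drop k s -> y \in x :: s.
Proof. by move=> h; rewrite in_cons (mem_drop h) orbT. Qed.

End Seqs.


Section Tree.
Variables (T : finType) (e : rel T).
Hypothesis esym : symmetric e.
Hypothesis econn : connected_graph e.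
Hypothesis acyc : acyclic e.

Lemma geo_uniq u p : path e u p -> dist e u (last u p) = size p -> uniq (u :: p).
Proof.
move=> pp dp.
case: (shortenP pp) dp => p' pp' up' sub dp.
apply: (leq_size_uniq up').
- move=> y; rewrite !in_cons => /orP[->//|/sub ->]; by rewrite orbT.
- by rewrite /= ltnS -dp; apply: (dist_le econn).
Qed.

Lemma canon x0 s w q k : path e x0 s -> uniq (x0 :: s) -> path e w q ->
  uniq (w :: q) -> k <= size s -> nth x0 (x0 :: s) k = last w q ->
  (forall z, z \in w :: q -> z \in x0 :: s -> z = last w q) ->
  [/\ path e w (q ++ drop k s), uniq (w :: q ++ drop k s)
    & last w (q ++ drop k s) = last x0 s].
Proof.
move=> ps us pq uq ks nk inter; split.
- by rewrite cat_path pq -nk drop_path.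
- rewrite -cat_cons cat_uniq uq drop_uniq ?andbT; last by case/andP: us.
  apply/hasPn => z zd; apply/negP => zq.
  have zD : z \in x0 :: s by apply: mem_drop_sub zd.
  have := inter z zq zD; rewrite -nk => ez.
  by move: (nth_notin_drop us ks); rewrite -ez zd.
- by rewrite last_cat -nk last_drop.
Qed.

Lemma gate x0 s w q k : path e x0 s -> uniq (x0 :: s) -> path e w q ->
  uniq (w :: q) -> k <= size s -> nth x0 (x0 :: s) k = last w q ->
  (forall z, z \in w :: q -> z \in x0 :: s -> z = last w q) ->
  dist e w (last x0 s) = size q + (size s - k).
Proof.
move=> ps us pq uq ks nk inter.
have [pc uc lc] := canon ps us pq uq ks nk inter.
have [g [sg pg lg]] := geodesic econn w (last x0 s).
have ug : uniq (w :: g) by apply: (geo_uniq pg); rewrite lg sg.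
have eg : g = q ++ drop k s by apply: (@path_unique _ e esym acyc w) => //; rewrite lg lc.
by rewrite -sg eg size_cat size_drop.
Qed.

Lemma fork_free y s1 s2 p1 p2 : e y s1 -> e y s2 ->
  path e s1 p1 -> path e s2 p2 -> uniq (s1 :: p1) -> uniq (s2 :: p2) ->
  y \notin s1 :: p1 -> y \notin s2 :: p2 -> last s1 p1 = last s2 p2 -> s1 = s2.
Proof.
move=> e1 e2 pp1 pp2 u1 u2 n1 n2 l.
have h : s1 :: p1 = s2 :: p2.
  apply: (@path_unique _ e esym acyc y).
  - by rewrite /= e1.
  - by rewrite /= e2.
  - by rewrite cons_uniq n1.
  - by rewrite cons_uniq n2.
  - exact: l.
by case: h.
Qed.

End Tree.


Lemma card_bigcup_le (T : finType) (I : finType) (F : I -> {set T}) :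
  #|\bigcup_(i : I) F i| <= \sum_(i : I) #|F i|.
Proof.
elim/big_rec2: _ => [|i A n _ IH]; first by rewrite cards0.
rewrite cardsU; apply: leq_trans (leq_subr _ _) _.
by rewrite leq_add2l.
Qed.

Section Main.
Variables (T : finType) (e : rel T) (v0 : T) (rest : seq T) (u vi : T) (l : nat).
Hypothesis htree : tree e.
Hypothesis hD : diametral_path e v0 rest.
Hypothesis hP : protrudes_from e (v0 :: rest) u vi.
Hypothesis hl : dist e u vi = l.
Hypothesis hl2 : 2 < l.
Variable p : seq T.
Hypothesis sp : size p = l.
Hypothesis pp : path e u p.
Hypothesis lp : last u p = vi.

Let esym : symmetric e. Proof. by case: htree => -[]. Qed.
Let econn : connected_graph e. Proof. by case: htree. Qed.
Let acyc : acyclic e. Proof. by case: htree. Qed.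

Local Notation D := (v0 :: rest).
Local Notation d := (size rest).
Local Notation vd := (last v0 rest).
Local Notation dist := (dist e).

Let pD : path e v0 rest. Proof. by case: hD. Qed.
Let uD : uniq D. Proof. by case: hD. Qed.
Let sd : d = diam e. Proof. by case: hD. Qed.
Let dd : dist v0 vd = d. Proof. by case: hD => _ _ -> ->. Qed.

Lemma dist_diam x y : dist x y <= diam e.
Proof.
apply: leq_trans (leq_bigmax (F := fun w => dist x w) y) _.
exact: (leq_bigmax (F := ecc e) x).
Qed.

Lemma ecc_ge x y : dist x y <= ecc e x.
Proof. exact: (leq_bigmax (F := fun w => dist x w) y). Qed.

Lemma ecc_lt x : ecc e x < #|T|.
Proof.
have h : 0 < #|T| by apply/card_gt0P; exists x.
rewrite -(prednK h) ltnS; apply/bigmax_leqP => w _.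
by rewrite -ltnS prednK // dist_lt.
Qed.

Lemma distD t : t <= d -> dist v0 (nth v0 D t) = t /\ dist (nth v0 D t) vd = d - t.
Proof.
move=> td.
have h1 : dist v0 (nth v0 D t) <= t.
  have := dist_le econn (take_path t pD).
  by rewrite last_take // size_takel.
have h2 : dist (nth v0 D t) vd <= d - t.
  have := dist_le econn (drop_path td pD).
  by rewrite last_drop // size_drop.
have := dist_tri econn v0 (nth v0 D t) vd; rewrite dd => h3.
split; lia.
Qed.

Let i := index vi D.
Let viD : vi \in D. Proof. by case: hP. Qed.
Let uD' : u \notin D. Proof. by case: hP. Qed.
Let id_ : i <= d. Proof. by have := viD; rewrite -index_mem /= ltnS. Qed.
Let nthi : nth v0 D i = vi. Proof. exact: nth_index. Qed.

Local Notation PP := (u :: p).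

Let uP : uniq PP. Proof. by apply: (geo_uniq econn pp); rewrite lp hl sp. Qed.

Lemma distP j : j <= l -> dist u (nth u PP j) = j /\ dist (nth u PP j) vi = l - j.
Proof.
move=> jl; rewrite -sp in jl.
have h1 : dist u (nth u PP j) <= j.
  have := dist_le econn (take_path j pp).
  by rewrite last_take // size_takel.
have h2 : dist (nth u PP j) vi <= l - j.
  have := dist_le econn (drop_path jl pp).
  by rewrite last_drop // size_drop lp sp.
have := dist_tri econn u (nth u PP j) vi; rewrite hl => h3.
rewrite sp in jl; split; lia.
Qed.

Lemma PD y : y \in PP -> y \in D -> y = vi.
Proof.
move=> yP yD; apply/eqP; apply/negPn/negP => ne.
case: hP => _ _ /(_ y yD ne); rewrite hl.
have jl : index y PP <= l by rewrite -sp -ltnS; have := yP; rewrite -index_mem.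
have [h _] := distP jl; rewrite nth_index // in h.
by rewrite h ltnNge jl.
Qed.

Lemma viP : vi \in PP.
Proof. by rewrite -lp mem_last. Qed.

Lemma inPP j z : z \in nth u PP j :: drop j p -> z \in PP.
Proof.
rewrite in_cons => /orP[/eqP->|zd]; last exact: mem_drop_sub zd.
case: (ltnP j (size PP)) => h; first exact: mem_nth.
by rewrite nth_default // mem_head.
Qed.

Lemma gateR j : j <= l -> dist (nth u PP j) vd = (l - j) + (d - i).
Proof.
move=> jl; have jp : j <= size p by rewrite sp.
have := @gate _ e esym econn acyc v0 rest (nth u PP j) (drop j p) i pD uD
  (drop_path jp pp) (uniq_drop_cons uP jp) id_.
rewrite last_drop // lp size_drop sp; apply => //.
by move=> z /inPP zP zD; apply: PD.
Qed.

Lemma revD : vd :: rev (belast v0 rest) = rev D.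
Proof. by rewrite [in RHS]lastI rev_rcons. Qed.

Lemma gateL j : j <= l -> dist (nth u PP j) v0 = (l - j) + i.
Proof.
move=> jl; have jp : j <= size p by rewrite sp.
have ps : path e vd (rev (belast v0 rest)) by apply: rev_walk.
have us : uniq (vd :: rev (belast v0 rest)) by rewrite revD rev_uniq.
have ks : d - i <= size (rev (belast v0 rest)) by rewrite size_rev size_belast leq_subr.
have := @gate _ e esym econn acyc vd (rev (belast v0 rest)) (nth u PP j) (drop j p)
  (d - i) ps us (drop_path jp pp) (uniq_drop_cons uP jp) ks.
rewrite last_drop // lp size_drop sp size_rev size_belast last_rev_belast.
have -> : d - (d - i) = i by lia.
apply.
- rewrite revD nth_rev /=; last by lia.
  have -> : d.+1 - (d - i).+1 = i by lia.
  by rewrite (set_nth_default v0) ?nthi //= ltnS.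
- by move=> z /inPP zP; rewrite revD mem_rev => zD; apply: PD.
Qed.

Lemma i_ge : l <= i.
Proof.
have := gateR (leq0n l); rewrite subn0 /= => h.
have := dist_diam u vd; rewrite h -sd; lia.
Qed.

Lemma di_ge : l <= d - i.
Proof.
have := gateL (leq0n l); rewrite subn0 /= => h.
have := dist_diam u v0; rewrite h -sd; lia.
Qed.

Lemma canonS s : (s \in D) || (s \in PP) -> exists q,
  [/\ path e s q, uniq (s :: q), last s q = vd &
     forall z, z \in s :: q -> (z \in D) || (z \in PP)].
Proof.
case/orP => [sD|sP].
  have td : index s D <= d by have := sD; rewrite -index_mem /= ltnS.
  have ns : nth v0 D (index s D) = s by rewrite nth_index.
  exists (drop (index s D) rest); split.
  - by rewrite -{1}ns; apply: drop_path.
  - by rewrite -{1}ns; apply: uniq_drop_cons.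
  - by rewrite -{1}ns last_drop.
  - move=> z; rewrite in_cons => /orP[/eqP->|zd]; first by rewrite sD.
    by rewrite (mem_drop_sub v0 zd).
have jl : index s PP <= size p by have := sP; rewrite -index_mem /= ltnS.
have ns : nth u PP (index s PP) = s by rewrite nth_index.
have := @canon _ e v0 rest (nth u PP (index s PP)) (drop (index s PP) p) i pD uD
  (drop_path jl pp) (uniq_drop_cons uP jl) id_.
rewrite last_drop // lp => /(_ nthi).
case; first by move=> z /inPP zP zD; apply: PD.
rewrite ns.
move=> pc uc lc; exists (drop (index s PP) p ++ drop i rest); split => //.
move=> z; rewrite -cat_cons mem_cat => /orP[zq|zd].
  by rewrite (inPP (j := index s PP)) ?orbT // ns.
by rewrite (mem_drop_sub v0 zd).
Qed.

Lemma v0_vd : v0 != vd.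
Proof.
apply/eqP => h; have := dd; rewrite -h (dist0 econn) => h'.
have := i_ge; have := di_ge; lia.
Qed.

Lemma u_v0 : u != v0.
Proof. by apply/eqP => h; move: uD'; rewrite h mem_head. Qed.

Lemma u_vd : u != vd.
Proof. by apply/eqP => h; move: uD'; rewrite h mem_last. Qed.

Definition cval x := if x == v0 then i.-1 else if x == vd then d - i - 1
  else if x == u then l else 0.

Lemma cv0 : cval v0 = i.-1. Proof. by rewrite /cval eqxx. Qed.
Lemma cvd : cval vd = d - i - 1.
Proof. by rewrite /cval eq_sym (negbTE v0_vd) eqxx. Qed.
Lemma cu : cval u = l.
Proof. by rewrite /cval (negbTE u_v0) (negbTE u_vd) eqxx. Qed.
Lemma cother x : x != v0 -> x != vd -> x != u -> cval x = 0.
Proof. by move=> /negbTE a /negbTE b /negbTE c; rewrite /cval a b c. Qed.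

Definition cov y := [exists x, (1 <= cval x) && (dist y x <= cval x)].
Definition fb y := if cov y then cval y else 1.

Lemma cov_pos x : 1 <= cval x -> cov x.
Proof. by move=> h; apply/existsP; exists x; rewrite h (dist0 econn). Qed.

Lemma cv0_pos : 1 <= cval v0. Proof. by rewrite cv0; have := i_ge; lia. Qed.
Lemma cvd_pos : 1 <= cval vd. Proof. by rewrite cvd; have := di_ge; lia. Qed.
Lemma cu_pos : 1 <= cval u. Proof. by rewrite cu; lia. Qed.

Lemma covS y : (y \in D) || (y \in PP) -> cov y.
Proof.
case/orP => [yD|yP].
  have td : index y D <= d by have := yD; rewrite -index_mem /= ltnS.
  have ny : nth v0 D (index y D) = y by rewrite nth_index.
  have [h1 h2] := distD td; rewrite ny in h1 h2.
  apply/existsP; case: (ltngtP (index y D) i) => c.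
  - exists v0; rewrite cv0_pos cv0 /= (dist_sym esym econn) h1; lia.
  - exists vd; rewrite cvd_pos cvd /= h2; lia.
  - exists u; rewrite cu_pos cu /=.
    have -> : y = vi by rewrite -ny c nthi.
    by rewrite (dist_sym esym econn) hl.
have jl : index y PP <= l by rewrite -sp; have := yP; rewrite -index_mem /= ltnS.
have [h1 _] := distP jl; rewrite nth_index // in h1.
by apply/existsP; exists u; rewrite cu_pos cu (dist_sym esym econn) h1.
Qed.

Lemma fb_center x : 1 <= cval x -> fb x = cval x.
Proof. by move=> h; rewrite /fb cov_pos. Qed.

Lemma fb_dom : dominatingb e fb.
Proof.
apply/forallP => y; apply/existsP; case C: (cov y).
  move/existsP: C => [x /andP[h1 h2]]; exists x; by rewrite fb_center // h1 h2.
by exists y; rewrite /fb C (dist0 econn).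
Qed.

Lemma fb_ecc y : fb y <= ecc e y.
Proof.
rewrite /fb; case: (cov y).
  rewrite /cval; case: eqP => [->|_].
    apply: leq_trans (ecc_ge v0 vd); rewrite dd; lia.
  case: eqP => [->|_].
    apply: leq_trans (ecc_ge vd v0); rewrite (dist_sym esym econn) dd; lia.
  case: eqP => [->|_] //.
  by rewrite -hl ecc_ge.
case: (posnP (dist y u)) => [h|h]; last exact: leq_trans h (ecc_ge y u).
case: (posnP (dist y vi)) => [h'|h']; last exact: leq_trans h' (ecc_ge y vi).
move/(dist0_eq econn): h => yu; move/(dist0_eq econn): h' => yv.
by move: uD'; rewrite -yu yv viD.
Qed.

Lemma fb_lt y : fb y < #|T|.+1.
Proof. by rewrite ltnS; apply: leq_trans (fb_ecc y) (ltnW (ecc_lt y)). Qed.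

Definition Sset := [set y | (y \in D) || (y \in PP)].

Lemma cardS : #|Sset| = d + l + 1.
Proof.
have -> : Sset = [set y in D] :|: [set y in PP] by apply/setP => y; rewrite in_setU !in_set.
rewrite cardsU.
have -> : [set y in D] :&: [set y in PP] = [set vi].
  apply/setP => y; rewrite in_setI !in_set in_set1; apply/andP/eqP => [[yD yP]|->].
    exact: PD.
  by rewrite viD viP.
rewrite cards1 !cardsE; move/card_uniqP: uD => ->; move/card_uniqP: uP => ->.
by rewrite /= sp; lia.
Qed.

Section Count.
Variable g : T -> nat.
Hypothesis gdom : dominatingb e g.
Hypothesis gle : forall v, g v <= fb v.

Definition Ball x := [set y in Sset | (1 <= g x) && (dist y x <= g x)].

Lemma S_sub : Sset \subset \bigcup_(x : T) Ball x.
Proof.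
apply/subsetP => y yS; move/forallP: gdom => /(_ y) /existsP[x /andP[h1 h2]].
by apply/bigcupP; exists x => //; rewrite inE yS h1 h2.
Qed.

Lemma ball_v0 : #|Ball v0| <= (g v0).+1.
Proof.
have gv : g v0 <= i.-1 by rewrite -cv0 -fb_center ?cv0_pos.
apply: (@leq_trans #|[set nth v0 D (val t) | t : 'I_(g v0).+1]|); last first.
  by apply: leq_trans (leq_imset_card _ _) _; rewrite card_ord.
apply/subset_leq_card/subsetP => y; rewrite !in_set => /andP[/orP[yD|yP] /andP[_ dy]].
  have td : index y D <= d by have := yD; rewrite -index_mem /= ltnS.
  have [h1 _] := distD td; rewrite nth_index // (dist_sym esym econn) in h1.
  have ty : index y D < (g v0).+1 by rewrite ltnS -h1.
  by apply/imsetP; exists (Ordinal ty); rewrite //= nth_index.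
have jl : index y PP <= l by rewrite -sp; have := yP; rewrite -index_mem /= ltnS.
have := gateL jl; rewrite nth_index // => h; exfalso; move: dy; rewrite h; have := i_ge; lia.
Qed.

Lemma ball_vd : #|Ball vd| <= (g vd).+1.
Proof.
have gv : g vd <= d - i - 1 by rewrite -cvd -fb_center ?cvd_pos.
apply: (@leq_trans #|[set nth v0 D (d - val t) | t : 'I_(g vd).+1]|); last first.
  by apply: leq_trans (leq_imset_card _ _) _; rewrite card_ord.
apply/subset_leq_card/subsetP => y; rewrite !in_set => /andP[/orP[yD|yP] /andP[_ dy]].
  have td : index y D <= d by have := yD; rewrite -index_mem /= ltnS.
  have [_ h2] := distD td; rewrite nth_index // in h2.
  have ty : d - index y D < (g vd).+1 by rewrite ltnS -h2.
  apply/imsetP; exists (Ordinal ty) => //=.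
  by rewrite subKn // nth_index.
have jl : index y PP <= l by rewrite -sp; have := yP; rewrite -index_mem /= ltnS.
have := gateR jl; rewrite nth_index // => h; exfalso; move: dy; rewrite h.
have := di_ge; lia.
Qed.

Lemma ball_u : #|Ball u| <= (g u).+1.
Proof.
have gv : g u <= l by rewrite -cu -fb_center ?cu_pos.
apply: (@leq_trans #|[set nth u PP (val t) | t : 'I_(g u).+1]|); last first.
  by apply: leq_trans (leq_imset_card _ _) _; rewrite card_ord.
apply/subset_leq_card/subsetP => y; rewrite !in_set => /andP[yS /andP[_ dy]].
case yP: (y \in PP).
  have jl : index y PP <= l by rewrite -sp; have := yP; rewrite -index_mem /= ltnS.
  have [h1 _] := distP jl; rewrite nth_index // (dist_sym esym econn) in h1.
  have ty : index y PP < (g u).+1 by rewrite ltnS -h1.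
  by apply/imsetP; exists (Ordinal ty); rewrite //= nth_index.
rewrite yP orbF in yS; exfalso.
have yv : y != vi by apply/eqP => h; move: yP; rewrite h viP.
case: hP => _ _ /(_ y yS yv); rewrite hl (dist_sym esym econn) => h.
have := leq_trans dy gv; rewrite leqNgt h.
by [].
Qed.

Lemma ball_other x : x != v0 -> x != vd -> x != u -> #|Ball x| <= g x.
Proof.
move=> x1 x2 x3.
case: (posnP (g x)) => [g0|gpos].
  rewrite g0 leqn0 cards_eq0; apply/eqP/setP => y.
  by rewrite !in_set g0 /= andbF.
have fx : fb x = (if cov x then 0 else 1) by rewrite /fb cother.
have ncov : ~~ cov x.
  by apply/negP => c; have := gle x; rewrite fx c leqn0 => /eqP h; move: gpos; rewrite h.
have g1 : g x = 1.
  by have := gle x; rewrite fx (negbTE ncov) => h; apply/eqP; rewrite eqn_leq h gpos.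
have nS : ~~ ((x \in D) || (x \in PP)) by apply/negP => h; move: ncov; rewrite covS.
rewrite g1; apply/card_le1_eqP => y1 y2; rewrite !in_set g1 /=.
have edge : forall y, ((y \in D) || (y \in PP)) -> dist y x <= 1 -> e x y.
  move=> y yS dy; rewrite esym; apply: (dist1_edge econn).
  case: (posnP (dist y x)) => [h|h]; last by apply/eqP; rewrite eqn_leq h dy.
  by move/(dist0_eq econn): h => h; move: nS; rewrite -h yS.
move=> /andP[y1S d1] /andP[y2S d2].
have [q1 [pq1 uq1 lq1 mq1]] := canonS y1S.
have [q2 [pq2 uq2 lq2 mq2]] := canonS y2S.
suff yy : y1 = y2 by rewrite yy.
apply: (@fork_free _ e esym acyc x y1 y2 q1 q2) => //.
- exact: edge.
- exact: edge.
- by apply/negP => /mq1 h; move: nS; rewrite h.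
- by apply/negP => /mq2 h; move: nS; rewrite h.
- by rewrite lq1 lq2.
Qed.

Lemma ind_sum a : \sum_(x : T) (x == a : nat) = 1.
Proof.
rewrite (bigD1 a) //= eqxx big1 ?addn0 // => x /negbTE ->.
by [].
Qed.

Lemma count_bound : d + l + 1 <= cost g + 3.
Proof.
rewrite -cardS.
apply: leq_trans (subset_leq_card S_sub) _.
apply: leq_trans (card_bigcup_le _) _.
apply: (@leq_trans (\sum_(x : T) (g x + ((x == v0) + (x == vd) + (x == u))))).
  apply: leq_sum => x _.
  have n1 : (v0 == vd) = false by apply/negbTE; exact: v0_vd.
  have n2 : (v0 == u) = false by rewrite eq_sym; apply/negbTE; exact: u_v0.
  have n3 : (vd == u) = false by rewrite eq_sym; apply/negbTE; exact: u_vd.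
  have n4 : (vd == v0) = false by rewrite eq_sym.
  have n5 : (u == v0) = false by apply/negbTE; exact: u_v0.
  have n6 : (u == vd) = false by apply/negbTE; exact: u_vd.
  case: (eqVneq x v0) => [->|h0].
    by rewrite ?eqxx ?n1 ?n2 addn1 ball_v0.
  case: (eqVneq x vd) => [->|h1].
    by rewrite ?eqxx ?n4 ?n3 addn1 ball_vd.
  case: (eqVneq x u) => [->|h2].
    by rewrite ?eqxx ?n5 ?n6 addn1 ball_u.
  rewrite ?(negbTE h0) ?(negbTE h1) ?(negbTE h2) addn0.
  exact: ball_other.
by rewrite !big_split /= !ind_sum.
Qed.

End Count.

Lemma dom_ext f1 f2 : f1 =1 f2 -> dominatingb e f1 = dominatingb e f2.
Proof.
move=> h; apply: eq_forallb => x; apply: eq_existsb => y.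
by rewrite h.
Qed.

Lemma gamma_big : d < Gamma_b e.
Proof.
pose f0 : {ffun T -> 'I_#|T|.+1} := [ffun y => inord (fb y)].
have f0E y : val (f0 y) = fb y by rewrite ffunE; apply: inordK; exact: fb_lt.
pose ok (h : {ffun T -> 'I_#|T|.+1}) :=
  dominatingb e (fun v => val (h v)) && [forall v, val (h v) <= fb v].
have okf0 : ok f0.
  apply/andP; split; first by rewrite (dom_ext f0E) fb_dom.
  by apply/forallP => v; rewrite f0E.
case: (arg_minnP (fun h : {ffun T -> 'I_#|T|.+1} => cost (fun v => val (h v))) okf0) => gm okg gmin.
move/andP: okg => [gdom' /forallP gle'].
have mdb : minimal_dominating_broadcastb e (fun v => val (gm v)).
  apply/and3P; split => //.
    by apply/forallP => v; apply: leq_trans (gle' v) (fb_ecc v).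
  apply/forallP => v; apply/forallP => k; apply/negP => dk.
  pose h : {ffun T -> 'I_#|T|.+1} :=
    [ffun w => if w == v then inord (val k) else gm w].
  have hE w : val (h w) = if w == v then val k else val (gm w).
    rewrite ffunE; case: eqP => // _; apply: inordK.
    exact: ltn_trans (ltn_ord k) (ltn_ord (gm v)).
  have okh : ok h.
    apply/andP; split; first by rewrite (dom_ext hE).
    apply/forallP => w; rewrite hE; case: eqP => [->|_]; last exact: gle'.
    exact: leq_trans (ltnW (ltn_ord k)) (gle' v).
  have c1 : cost (fun w => val (gm w)) <= cost (fun w => val (h w)) := gmin h okh.
  have c2 : cost (fun w => val (h w)) < cost (fun w => val (gm w)).
    rewrite /cost (bigD1 v) //= [X in _ < X](bigD1 v) //= hE eqxx.
    rewrite (eq_bigr (fun w => val (gm w))) => [|w /negbTE wv]; last by rewrite hE wv.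
    by rewrite ltn_add2r ltn_ord.
  by move: (leq_ltn_trans c1 c2); rewrite ltnn.
have hG : cost (fun v => val (gm v)) <= Gamma_b e.
  exact: (leq_bigmax_cond (P := fun f : {ffun T -> 'I_#|T|.+1} =>
     minimal_dominating_broadcastb e (fun v => val (f v)))
     (F := fun f : {ffun T -> 'I_#|T|.+1} => cost (fun v => val (f v))) gm mdb).
have := count_bound gdom' gle'.
move: hG; have := hl2 => h2 hG' hc; apply: leq_trans hG'; move: hc; set c := cost _; lia.
Qed.

End Main.





Theorem mainTheorem8 (T : finType) (e : rel T) (v0 : T) (rest : seq T)
    (u vi : T) (l : nat) :
  tree e ->
  diametral_path e v0 rest ->
  protrudes_from e (v0 :: rest) u vi ->
  dist e u vi = l ->
  2 < l ->
  ~ diametrical e.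
Proof.
move=> ht hd hp hl hl2 hdiam.
have econn : connected_graph e by case: ht.
have [p [sp pp lp]] := geodesic econn u vi.
rewrite hl in sp.
have := gamma_big ht hd hp hl hl2 sp pp lp.
rewrite hdiam; case: hd => _ _ -> _.
by rewrite ltnn.
Qed.
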